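(* Consider an $M\times M$ input-queued switch, $\alpha>0$, $\lambda\in\Lambda$, and $q\in\mathcal I(\alpha)$. For every $(i,j)$ with $\lambda_{ij}>0$ there exists a permutation matrix $\pi$ with $\pi\cdot q^\alpha=\max_{\sigma\in\mathcal S}\sigma\cdot q^\alpha$ and $\pi_{ij}=1$ (powers taken componentwise).
   Context: Input-queued switch: queues indexed by $(i,j)$, $1\le i,j\le M$; schedule set $\mathcal S$ = all $M\times M$ permutation matrices; $x\cdot y=\sum_{ij}x_{ij}y_{ij}$. $\langle\mathcal S\rangle$ convex hull; $\Lambda=\{\lambda\in\mathbb R_+^{M\times M}:\lambda\le\sigma$ componentwise for some $\sigma\in\langle\mathcal S\rangle\}$. $E$ = extreme points of $\{\xi\ge0:\max_\pi\xi\cdot\pi\le1\}$, $\mathcal S^*$ its maximal elements, $\Xi(\lambda)=\{\xi\in\mathcal S^*:\xi\cdot\lambda=1\}$. $L_\alpha(q)=\sum_{ij}q_{ij}^{1+\alpha}/(1+\alpha)$; $\Delta_\alpha(q)$ is the unique minimizer of $L_\alpha(r)$ over $r\ge0$ subject to $\xi\cdot r\ge\xi\cdot q$ for all $\xi\in\Xi(\lambda)$ and $r_{ij}\le q_{ij}$ whenever $\lambda_{ij}=0$; $\mathcal I(\alpha)=\{q\ge0:\Delta_\alpha(q)=q\}$ (invariant states of MW-$\alpha$). *)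

(* Defs.v *)
From Stdlib Require Import Reals List.
Import ListNotations.
Open Scope R_scope.

(* An M x M real matrix is a function nat -> nat -> R; only entries with
   indices i, j < M are ever used (indices are 0-based). *)
Definition mx := nat -> nat -> R.

Definition sumM (M : nat) (f : nat -> R) : R :=
  fold_right Rplus 0 (map f (seq 0 M)).

Definition dot (M : nat) (x y : mx) : R :=
  sumM M (fun i => sumM M (fun j => x i j * y i j)).

Definition mx_eq (M : nat) (x y : mx) : Prop :=
  forall i j, (i < M)%nat -> (j < M)%nat -> x i j = y i j.

Definition mx_le (M : nat) (x y : mx) : Prop :=
  forall i j, (i < M)%nat -> (j < M)%nat -> x i j <= y i j.

Definition mx_nonneg (M : nat) (x : mx) : Prop :=
  forall i j, (i < M)%nat -> (j < M)%nat -> 0 <= x i j.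

Definition is_perm_mx (M : nat) (p : mx) : Prop :=
  (forall i j, (i < M)%nat -> (j < M)%nat -> p i j = 0 \/ p i j = 1) /\
  (forall i, (i < M)%nat -> sumM M (fun j => p i j) = 1) /\
  (forall j, (j < M)%nat -> sumM M (fun i => p i j) = 1).

Definition in_conv_hull_S (M : nat) (s : mx) : Prop :=
  exists l : list (R * mx),
    Forall (fun wp => 0 <= fst wp /\ is_perm_mx M (snd wp)) l /\
    fold_right Rplus 0 (map fst l) = 1 /\
    mx_eq M s (fun i j => fold_right Rplus 0 (map (fun wp => fst wp * snd wp i j) l)).

Definition in_Lambda (M : nat) (lam : mx) : Prop :=
  mx_nonneg M lam /\ exists s, in_conv_hull_S M s /\ mx_le M lam s.

Definition in_D (M : nat) (xi : mx) : Prop :=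
  mx_nonneg M xi /\ forall p, is_perm_mx M p -> dot M xi p <= 1.

Definition in_E (M : nat) (xi : mx) : Prop :=
  in_D M xi /\
  forall a b (t : R), in_D M a -> in_D M b -> 0 < t < 1 ->
    mx_eq M xi (fun i j => t * a i j + (1 - t) * b i j) ->
    mx_eq M a xi /\ mx_eq M b xi.

Definition in_Sstar (M : nat) (xi : mx) : Prop :=
  in_E M xi /\ forall xi', in_E M xi' -> mx_le M xi xi' -> mx_eq M xi' xi.

Definition in_Xi (M : nat) (lam xi : mx) : Prop :=
  in_Sstar M xi /\ dot M xi lam = 1.

(* x^a for x >= 0 and a > 0, with 0^a = 0 *)
Definition rpow (x a : R) : R :=
  if Rle_dec x 0 then 0 else Rpower x a.

Definition mx_pow (q : mx) (a : R) : mx := fun i j => rpow (q i j) a.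

Definition L_alpha (M : nat) (alpha : R) (q : mx) : R :=
  sumM M (fun i => sumM M (fun j => rpow (q i j) (1 + alpha) / (1 + alpha))).

(* feasible set of the optimisation problem defining Delta_alpha(q) *)
Definition feasible (M : nat) (lam q r : mx) : Prop :=
  mx_nonneg M r /\
  (forall xi, in_Xi M lam xi -> dot M xi q <= dot M xi r) /\
  (forall i j, (i < M)%nat -> (j < M)%nat -> lam i j = 0 -> r i j <= q i j).

(* q in I(alpha): q >= 0 and Delta_alpha(q) = q, i.e. q is the unique
   minimiser of L_alpha over the feasible set *)
Definition invariant (M : nat) (alpha : R) (lam q : mx) : Prop :=
  mx_nonneg M q /\
  feasible M lam q q /\
  (forall r, feasible M lam q r -> L_alpha M alpha q <= L_alpha M alpha r) /\
  (forall r, feasible M lam q r -> L_alpha M alpha r = L_alpha M alpha q ->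
             mx_eq M r q).

(* Main.v *)
Require Import Defs.
From Stdlib Require Import Reals List Lra Lia Psatz Classical.
Open Scope R_scope.

Lemma rpow_pos x a : 0 < x -> rpow x a = Rpower x a.
Proof. intros H; unfold rpow; destruct (Rle_dec x 0); [lra|auto]. Qed.
Lemma rpow_nonpos x a : x <= 0 -> rpow x a = 0.
Proof. intros H; unfold rpow; destruct (Rle_dec x 0); [auto|lra]. Qed.
Lemma rpow_ge0 x a : 0 <= rpow x a.
Proof. unfold rpow; destruct (Rle_dec x 0); [lra|]. unfold Rpower; left; apply exp_pos. Qed.

Lemma Rpower_pos x a : 0 < Rpower x a.
Proof. unfold Rpower; apply exp_pos. Qed.

Lemma conv_ineq (alpha x y : R) : 0 < alpha -> 0 <= x -> 0 <= y ->
  rpow y (1+alpha) / (1+alpha) - rpow x (1+alpha) / (1+alpha) <= (y - x) * rpow y alpha.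
Proof.
  intros Ha Hx Hy.
  assert (Hp : 0 < 1 + alpha) by lra.
  destruct (Req_dec y 0) as [Hy0|Hy0].
  { subst. rewrite (rpow_nonpos 0 (1+alpha)), (rpow_nonpos 0 alpha) by lra. pose proof (rpow_ge0 x (1+alpha)).
    assert (0 <= rpow x (1+alpha) / (1+alpha)) by (unfold Rdiv; apply Rmult_le_pos; [assumption|apply Rlt_le; apply Rinv_0_lt_compat; exact Hp]). lra. }
  assert (Hyp : 0 < y) by lra.
  rewrite (rpow_pos y) by lra. rewrite (rpow_pos y alpha) by lra.
  destruct (Req_dec x 0) as [Hx0|Hx0].
  { subst. rewrite rpow_nonpos by lra.
    rewrite Rpower_plus, Rpower_1 by lra.
    pose proof (Rpower_pos y alpha).
    apply Rmult_le_reg_r with (1+alpha); [lra|].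
    unfold Rdiv. rewrite Rmult_0_l, Rminus_0_r, Rmult_assoc, Rinv_l, Rmult_1_r by lra.
    assert (0 < y*Rpower y alpha*alpha) by (apply Rmult_lt_0_compat; [apply Rmult_lt_0_compat|]; lra). nra. }
  assert (Hxp : 0 < x) by lra.
  rewrite rpow_pos by lra.
  assert (Hd : forall c, 0 < c -> derivable_pt_lim (fun u => Rpower u (1+alpha)) c
                ((1+alpha) * Rpower c alpha)).
  { intros c Hc. replace alpha with (1+alpha-1) at 2 by ring.
    apply derivable_pt_lim_power; auto. }
  assert (Key : Rpower y (1+alpha) - Rpower x (1+alpha) <= (1+alpha) * ((y - x) * Rpower y alpha)).
  { destruct (Rtotal_order x y) as [Hlt|[Heq|Hgt]].
    - destruct (MVT_cor2 (fun u => Rpower u (1+alpha)) (fun c => (1+alpha) * Rpower c alpha) x y Hlt)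
        as [c [Hc Hc2]].
      { intros c Hc; apply Hd; lra. }
      simpl in Hc. rewrite Hc.
      assert (Rpower c alpha <= Rpower y alpha) by (apply Rle_Rpower_l; lra).
      assert (0 <= (Rpower y alpha - Rpower c alpha)*(y-x)) by (apply Rmult_le_pos; lra).
      assert (0 <= (1+alpha)*((Rpower y alpha - Rpower c alpha)*(y-x))) by (apply Rmult_le_pos; lra). nra.
    - subst. replace (y - y) with 0 by ring. rewrite Rmult_0_l, Rmult_0_r. lra.
    - destruct (MVT_cor2 (fun u => Rpower u (1+alpha)) (fun c => (1+alpha) * Rpower c alpha) y x Hgt)
        as [c [Hc Hc2]].
      { intros c Hc; apply Hd; lra. }
      simpl in Hc.
      assert (Rpower y alpha <= Rpower c alpha) by (apply Rle_Rpower_l; lra).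
      assert (0 <= (Rpower c alpha - Rpower y alpha)*(x-y)) by (apply Rmult_le_pos; lra).
      assert (0 <= (1+alpha)*((Rpower c alpha - Rpower y alpha)*(x-y))) by (apply Rmult_le_pos; lra). nra. }
  apply Rmult_le_reg_r with (1+alpha); [lra|].
  unfold Rdiv. rewrite Rmult_minus_distr_r, !Rmult_assoc, Rinv_l, !Rmult_1_r by lra. lra.
Qed.

Lemma rpow_cont (alpha a eta : R) : 0 < alpha -> 0 <= a -> 0 < eta ->
  exists delta, 0 < delta /\ forall x, 0 <= x -> Rabs (x - a) < delta ->
    Rabs (rpow x alpha - rpow a alpha) < eta.
Proof.
  intros Ha Ha0 He.
  destruct (Req_dec a 0) as [Hz|Hz].
  - subst. exists (Rpower eta (/alpha)). split; [apply Rpower_pos|].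
    intros x Hx Hd. rewrite (rpow_nonpos 0) by lra.
    destruct (Req_dec x 0) as [Hx0|Hx0].
    + subst. rewrite rpow_nonpos by lra. rewrite Rminus_0_r, Rabs_R0; auto.
    + rewrite rpow_pos by lra. rewrite Rminus_0_r in *.
      rewrite Rabs_right in * by (try left; try apply Rpower_pos; lra).
      replace eta with (Rpower (Rpower eta (/alpha)) alpha).
      * apply Rlt_Rpower_l; lra.
      * rewrite Rpower_mult, Rinv_l, Rpower_1 by lra. auto.
  - assert (Hap : 0 < a) by lra.
    assert (Hc : continuity_pt (fun u => Rpower u alpha) a).
    { apply derivable_continuous_pt. exists (alpha * Rpower a (alpha - 1)).
      apply derivable_pt_lim_power; auto. }
    unfold continuity_pt, continue_in, limit1_in, limit_in in Hc.
    destruct (Hc eta He) as [d0 [Hd0 Hd0']].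
    exists (Rmin d0 a). split; [apply Rmin_pos; lra|].
    intros x Hx Hd.
    assert (Hxa : Rabs (x - a) < d0) by (eapply Rlt_le_trans; [exact Hd| apply Rmin_l]).
    assert (Hxa2 : Rabs (x - a) < a) by (eapply Rlt_le_trans; [exact Hd| apply Rmin_r]).
    assert (Hxp : 0 < x).
    { destruct (Rcase_abs (x - a)); [rewrite Rabs_left in Hxa2 by lra|]; lra. }
    rewrite !rpow_pos by lra.
    destruct (Req_dec x a) as [Hxe|Hxe].
    + subst. rewrite Rminus_diag, Rabs_R0; auto.
    + apply (Hd0' x). split; [split; [exact I| auto]|]. exact Hxa.
Qed.

Definition LS {A} (l : list A) (f : A -> R) : R := fold_right Rplus 0 (map f l).

Lemma LS_cons {A} (a : A) l f : LS (a :: l) f = f a + LS l f.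
Proof. reflexivity. Qed.

Lemma LS_ext {A} (l : list A) f g : (forall x, In x l -> f x = g x) -> LS l f = LS l g.
Proof.
  induction l; intros H; [reflexivity|]. rewrite !LS_cons, H, IHl; auto.
  intros; apply H; right; auto. left; auto.
Qed.

Lemma LS_le {A} (l : list A) f g : (forall x, In x l -> f x <= g x) -> LS l f <= LS l g.
Proof.
  induction l; intros H; [unfold LS; simpl; lra|]. rewrite !LS_cons.
  assert (f a <= g a) by (apply H; left; auto).
  assert (LS l f <= LS l g) by (apply IHl; intros; apply H; right; auto). lra.
Qed.

Lemma LS_lt {A} (l : list A) f g : (forall x, In x l -> f x <= g x) ->
  (exists x, In x l /\ f x < g x) -> LS l f < LS l g.
Proof.
  induction l; intros H [x [Hx Hlt]]; [destruct Hx|]. rewrite !LS_cons.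
  destruct Hx as [Hx|Hx].
  - subst. assert (LS l f <= LS l g) by (apply LS_le; intros; apply H; right; auto). lra.
  - assert (f a <= g a) by (apply H; left; auto).
    assert (LS l f < LS l g) by (apply IHl; [intros; apply H; right; auto| exists x; auto]). lra.
Qed.

Lemma LS_plus {A} (l : list A) f g : LS l (fun x => f x + g x) = LS l f + LS l g.
Proof. induction l; [unfold LS; simpl; lra|]. rewrite !LS_cons, IHl. ring. Qed.

Lemma LS_scal {A} (l : list A) c f : LS l (fun x => c * f x) = c * LS l f.
Proof. induction l; [unfold LS; simpl; lra|]. rewrite !LS_cons, IHl. ring. Qed.

Lemma LS_const {A} (l : list A) c : LS l (fun _ => c) = INR (length l) * c.
Proof.
  induction l; [unfold LS; simpl; lra|]. rewrite LS_cons, IHl. simpl length.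
  rewrite S_INR. ring.
Qed.

Lemma LS_nonneg {A} (l : list A) f : (forall x, In x l -> 0 <= f x) -> 0 <= LS l f.
Proof. intros H. replace 0 with (LS l (fun _ => 0)). apply LS_le; auto.
  rewrite LS_const. ring. Qed.

Definition DS (M : nat) (f : nat -> nat -> R) : R := sumM M (fun i => sumM M (fun j => f i j)).

Lemma sumM_LS M f : sumM M f = LS (seq 0 M) f.
Proof. reflexivity. Qed.

Lemma DS_ext M f g : (forall i j, (i < M)%nat -> (j < M)%nat -> f i j = g i j) -> DS M f = DS M g.
Proof.
  intros H. unfold DS. rewrite !sumM_LS. apply LS_ext. intros i Hi.
  rewrite !sumM_LS. apply LS_ext. intros j Hj. apply in_seq in Hi, Hj. apply H; lia.
Qed.

Lemma DS_le M f g : (forall i j, (i < M)%nat -> (j < M)%nat -> f i j <= g i j) -> DS M f <= DS M g.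
Proof.
  intros H. unfold DS. rewrite !sumM_LS. apply LS_le. intros i Hi.
  rewrite !sumM_LS. apply LS_le. intros j Hj. apply in_seq in Hi, Hj. apply H; lia.
Qed.

Lemma DS_plus M f g : DS M (fun i j => f i j + g i j) = DS M f + DS M g.
Proof.
  unfold DS. rewrite !sumM_LS. rewrite <- LS_plus. apply LS_ext. intros.
  rewrite !sumM_LS. apply LS_plus.
Qed.

Lemma DS_scal M c f : DS M (fun i j => c * f i j) = c * DS M f.
Proof.
  unfold DS. rewrite !sumM_LS. rewrite <- LS_scal. apply LS_ext. intros.
  rewrite !sumM_LS. apply LS_scal.
Qed.

Lemma DS_minus M f g : DS M (fun i j => f i j - g i j) = DS M f - DS M g.
Proof.
  replace (DS M f - DS M g) with (DS M f + (-1) * DS M g) by ring.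
  rewrite <- DS_scal, <- DS_plus. apply DS_ext. intros. ring.
Qed.

Lemma DS_const M c : DS M (fun _ _ => c) = INR M * (INR M * c).
Proof.
  unfold DS. rewrite !sumM_LS.
  rewrite (LS_ext _ _ (fun _ => INR M * c)). rewrite LS_const, length_seq. auto.
  intros. change (LS (seq 0 M) (fun _ => c) = INR M * c). rewrite LS_const, length_seq. auto.
Qed.

Lemma DS_nonneg M f : (forall i j, (i < M)%nat -> (j < M)%nat -> 0 <= f i j) -> 0 <= DS M f.
Proof. intros H. replace 0 with (DS M (fun _ _ => 0)). apply DS_le; auto.
  rewrite DS_const. ring. Qed.

Lemma dot_DS M x y : dot M x y = DS M (fun i j => x i j * y i j).
Proof. reflexivity. Qed.

Lemma fin_delta (P : nat -> R -> Prop) (n : nat) :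
  (forall k, (k < n)%nat -> exists d, 0 < d /\ forall e, 0 < e < d -> P k e) ->
  exists d, 0 < d /\ forall e, 0 < e < d -> forall k, (k < n)%nat -> P k e.
Proof.
  induction n; intros H.
  - exists 1. split; [lra|]. intros; lia.
  - destruct IHn as [d1 [Hd1 H1]]. { intros; apply H; lia. }
    destruct (H n (Nat.lt_succ_diag_r n)) as [d2 [Hd2 H2]].
    exists (Rmin d1 d2). split; [apply Rmin_pos; auto|].
    intros e He k Hk.
    pose proof (Rmin_l d1 d2). pose proof (Rmin_r d1 d2).
    destruct (Nat.eq_dec k n).
    + subst; apply H2; lra.
    + apply H1; [lra|lia].
Qed.

Lemma dot_combo M (l : list (R * mx)) w :
  dot M (fun i j => fold_right Rplus 0 (map (fun wp => fst wp * snd wp i j) l)) w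
  = LS l (fun wp => fst wp * dot M (snd wp) w).
Proof.
  induction l as [|a l IH].
  - rewrite dot_DS. simpl. rewrite (DS_ext _ (fun i j => 0 * w i j) (fun _ _ => 0)).
    + rewrite DS_const. unfold LS; simpl; ring.
    + intros; ring.
  - rewrite LS_cons, <- IH, !dot_DS, <- DS_scal, <- DS_plus. apply DS_ext. intros. simpl. rewrite Rmult_plus_distr_r, Rmult_assoc. reflexivity.
Qed.

Lemma find_pos (l : list (R * mx)) i j :
  (forall wp, In wp l -> 0 <= fst wp /\ (snd wp i j = 0 \/ snd wp i j = 1)) ->
  0 < fold_right Rplus 0 (map (fun wp => fst wp * snd wp i j) l) ->
  exists wp, In wp l /\ 0 < fst wp /\ snd wp i j = 1.
Proof.
  induction l as [|a l IH]; intros H Hpos; [simpl in Hpos; lra|].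
  change (0 < fst a * snd a i j + fold_right Rplus 0 (map (fun wp => fst wp * snd wp i j) l)) in Hpos.
  destruct (H a (or_introl eq_refl)) as [Ha [Ha0|Ha1]].
  - rewrite Ha0, Rmult_0_r, Rplus_0_l in Hpos.
    destruct IH as [wp [? ?]]; auto. intros; apply H; right; auto. exists wp; split; auto. right; auto.
  - destruct (Rlt_dec 0 (fst a)).
    + exists a; split; [left; auto|auto].
    + assert (fst a = 0) by lra. rewrite H0, Rmult_0_l, Rplus_0_l in Hpos.
      destruct IH as [wp [? ?]]; auto. intros; apply H; right; auto. exists wp; split; auto. right; auto.
Qed.

Lemma argmax M w (l : list (R * mx)) s0 :
  is_perm_mx M s0 -> (forall wp, In wp l -> is_perm_mx M (snd wp)) ->
  exists m, is_perm_mx M m /\ dot M s0 w <= dot M m w /\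
    forall wp, In wp l -> dot M (snd wp) w <= dot M m w.
Proof.
  intros Hs0. induction l as [|a l IH]; intros H.
  - exists s0. split; auto. split; [lra| intros _ []].
  - destruct IH as [m [Hm [H1 H2]]]. intros; apply H; right; auto.
    destruct (Rle_dec (dot M (snd a) w) (dot M m w)).
    + exists m. split; auto. split; auto. intros wp [<-|Hin]; auto.
    + exists (snd a). split; [apply H; left; auto|]. split; [lra|].
      intros wp [<-|Hin]; [lra|]. specialize (H2 wp Hin); lra.
Qed.

Theorem lemmaA3 (M : nat) (alpha : R) (lam q : mx) :
  0 < alpha ->
  in_Lambda M lam ->
  invariant M alpha lam q ->
  forall i j, (i < M)%nat -> (j < M)%nat -> 0 < lam i j ->
  exists p, is_perm_mx M p /\
    (forall s, is_perm_mx M s ->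
       dot M s (mx_pow q alpha) <= dot M p (mx_pow q alpha)) /\
    p i j = 1.
Proof.
  intros Ha [Hlam0 [sig [[l [Hl [Hsum Hsig]]] Hls]]] [Hq0 [Hfq [Hmin _]]] i j Hi Hj Hlij.
  apply NNPP; intro Hno.
  set (w := mx_pow q alpha).
  assert (Hw0 : forall k l, 0 <= w k l) by (intros; apply rpow_ge0).
  rewrite Forall_forall in Hl.
  assert (HA : exists wp, In wp l /\ 0 < fst wp /\ snd wp i j = 1).
  { apply find_pos.
    - intros wp Hwp. destruct (Hl wp Hwp) as [Hc [Hp01 _]]. split; auto.
    - rewrite <- Hsig by auto. specialize (Hls i j Hi Hj). lra. }
  destruct HA as [[c0 p0] [Hin0 [Hc0 Hp0]]]; simpl in Hc0, Hp0.
  assert (Hp0perm : is_perm_mx M p0) by (apply (Hl _ Hin0)).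
  assert (HB : exists s0, is_perm_mx M s0 /\ dot M p0 w < dot M s0 w).
  { apply NNPP; intro H. apply Hno. exists p0. split; auto. split; auto.
    intros s Hs. apply Rnot_lt_le; intro Hlt. apply H. exists s; auto. }
  destruct HB as [s0 [Hs0 Hs0lt]].
  destruct (argmax M w l s0 Hs0) as [m [Hm [Hm1 Hm2]]].
  { intros wp Hwp; apply (Hl wp Hwp). }
  assert (HD : dot M lam w < dot M m w).
  { apply Rle_lt_trans with (dot M sig w).
    { rewrite !dot_DS. apply DS_le. intros k l' Hk Hl'.
      apply Rmult_le_compat_r; [apply Hw0| apply Hls; auto]. }
    rewrite (dot_DS M sig), (DS_ext _ _ (fun k l' =>
      fold_right Rplus 0 (map (fun wp => fst wp * snd wp k l') l) * w k l')).
    2:{ intros k l' Hk Hl'. rewrite Hsig; auto. }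
    change (dot M (fun k l' => fold_right Rplus 0 (map (fun wp => fst wp * snd wp k l') l)) w
              < dot M m w).
    rewrite dot_combo.
    apply Rlt_le_trans with (LS l (fun wp => fst wp * dot M m w)).
    - apply LS_lt.
      + intros wp Hwp. apply Rmult_le_compat_l; [apply (Hl wp Hwp)|]. apply Hm2; auto.
      + exists (c0, p0). split; auto. simpl. apply Rmult_lt_compat_l; auto. lra.
    - rewrite (LS_ext _ _ (fun wp => dot M m w * fst wp)) by (intros; ring).
      rewrite LS_scal. change (LS l fst) with (fold_right Rplus 0 (map fst l)).
      rewrite Hsum. lra. }
  assert (Hm01 : forall k l', (k < M)%nat -> (l' < M)%nat -> m k l' = 0 \/ m k l' = 1)
    by (apply Hm).
  set (rho := fun k l' => if Rlt_dec 0 (q k l') then m k l' else 0).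
  set (d := fun k l' => lam k l' - rho k l').
  assert (Hrho : forall k l', (k < M)%nat -> (l' < M)%nat ->
            0 <= rho k l' <= 1 /\ rho k l' <= m k l').
  { intros k l' Hk Hl'. unfold rho. destruct (Rlt_dec 0 (q k l')).
    - destruct (Hm01 k l' Hk Hl') as [E|E]; rewrite E; lra.
    - destruct (Hm01 k l' Hk Hl') as [E|E]; rewrite E; lra. }
  assert (Hrhow : dot M rho w = dot M m w).
  { rewrite !dot_DS. apply DS_ext. intros k l' Hk Hl'. unfold rho.
    destruct (Rlt_dec 0 (q k l')); auto.
    unfold w, mx_pow. rewrite rpow_nonpos by lra. ring. }
  set (D := dot M d w).
  assert (HDneg : D < 0).
  { unfold D. rewrite dot_DS.
    rewrite (DS_ext _ _ (fun k l' => lam k l' * w k l' - rho k l' * w k l'))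
      by (intros; unfold d; ring).
    rewrite DS_minus. rewrite <- !dot_DS. lra. }
  assert (Hxi : forall xi, in_Xi M lam xi -> 0 <= dot M xi d).
  { intros xi [[[[Hxi0 Hxi1] _] _] Hxl].
    rewrite dot_DS.
    rewrite (DS_ext _ _ (fun k l' => xi k l' * lam k l' - xi k l' * rho k l'))
      by (intros; unfold d; ring).
    rewrite DS_minus. rewrite <- !dot_DS. rewrite Hxl.
    assert (dot M xi rho <= dot M xi m).
    { rewrite !dot_DS. apply DS_le. intros k l' Hk Hl'.
      apply Rmult_le_compat_l; [apply Hxi0; auto| apply Hrho; auto]. }
    specialize (Hxi1 m Hm). lra. }
  set (eta := - D / (INR M * INR M + 1)).
  assert (HMM : 0 <= INR M * INR M) by (apply Rmult_le_pos; apply pos_INR).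
  assert (Heta : 0 < eta).
  { unfold eta, Rdiv. apply Rmult_lt_0_compat; [lra|]. apply Rinv_0_lt_compat; lra. }
  assert (Hd_lb : forall k l', (k < M)%nat -> (l' < M)%nat -> -1 <= d k l').
  { intros k l' Hk Hl'. unfold d. pose proof (Hlam0 k l' Hk Hl'). pose proof (Hrho k l' Hk Hl'). lra. }
  assert (Hd_q0 : forall k l', q k l' <= 0 -> d k l' = lam k l').
  { intros k l' Hq. unfold d, rho. destruct (Rlt_dec 0 (q k l')); [lra|ring]. }
  destruct (fin_delta (fun k e => forall l', (l' < M)%nat ->
      0 <= q k l' + e * d k l' /\ d k l' * rpow (q k l' + e * d k l') alpha <= d k l' * w k l' + eta) M) as [dl [Hdl Hdl']].
  { intros k Hk.
    apply (fin_delta (fun l' e => 0 <= q k l' + e * d k l' /\ d k l' * rpow (q k l' + e * d k l') alpha <= d k l' * w k l' + eta) M).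
    intros l' Hl'.
    set (a := q k l'). set (b := d k l').
    assert (Ha0 : 0 <= a) by (apply Hq0; auto).
    assert (Hb1 : -1 <= b) by (apply Hd_lb; auto).
    assert (Hab : 0 < Rabs b + 1) by (pose proof (Rabs_pos b); lra).
    destruct (rpow_cont alpha a (eta / (Rabs b + 1)) Ha Ha0) as [d1 [Hd1 Hd1']].
    { unfold Rdiv; apply Rmult_lt_0_compat; auto. apply Rinv_0_lt_compat; auto. }
    set (d2 := if Rlt_dec 0 a then a else 1).
    assert (Hd2 : 0 < d2) by (unfold d2; destruct (Rlt_dec 0 a); lra).
    exists (Rmin (d1 / (Rabs b + 1)) d2). split.
    { apply Rmin_pos; auto. unfold Rdiv; apply Rmult_lt_0_compat; auto. apply Rinv_0_lt_compat; auto. }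
    intros e [He1 He2].
    pose proof (Rmin_l (d1 / (Rabs b + 1)) d2). pose proof (Rmin_r (d1 / (Rabs b + 1)) d2).
    assert (Hnn : 0 <= a + e * b).
    { unfold d2 in *. destruct (Rlt_dec 0 a).
      - assert (0 <= e * (b + 1)) by (apply Rmult_le_pos; lra). nra.
      - assert (b = lam k l') by (apply Hd_q0; unfold a in *; lra).
        assert (0 <= lam k l') by (apply Hlam0; auto).
        assert (0 <= e * b) by (apply Rmult_le_pos; lra). lra. }
    split; [exact Hnn|].
    assert (He3 : e * (Rabs b + 1) < d1).
    { apply Rmult_lt_reg_r with (/ (Rabs b + 1)). apply Rinv_0_lt_compat; auto.
      rewrite Rmult_assoc, Rinv_r by lra. rewrite Rmult_1_r. unfold Rdiv in *. lra. }
    assert (Hclose : Rabs (a + e * b - a) < d1).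
    { replace (a + e * b - a) with (e * b) by ring. rewrite Rabs_mult, (Rabs_right e) by lra.
      pose proof (Rabs_pos b). nra. }
    specialize (Hd1' _ Hnn Hclose).
    unfold w, mx_pow. fold a.
    set (u := rpow (a + e * b) alpha - rpow a alpha) in *.
    assert (b * u <= Rabs b * Rabs u).
    { rewrite <- Rabs_mult. apply Rle_abs. }
    assert (Rabs b * Rabs u <= Rabs b * (eta / (Rabs b + 1))).
    { apply Rmult_le_compat_l; [apply Rabs_pos|lra]. }
    assert (Rabs b * (eta / (Rabs b + 1)) <= eta).
    { unfold Rdiv. apply Rmult_le_reg_r with (Rabs b + 1); auto.
      rewrite Rmult_assoc, Rmult_assoc, Rinv_l, Rmult_1_r by lra.
      assert (0 <= Rabs b * eta) by (apply Rmult_le_pos; [apply Rabs_pos|lra]). nra. }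
    unfold u in *. nra. }
  set (e := dl / 2).
  assert (He : 0 < e < dl) by (unfold e; lra).
  set (r := fun k l' => q k l' + e * d k l').
  assert (Hfr : feasible M lam q r).
  { split; [|split].
    - intros k l' Hk Hl'. apply (Hdl' e He k Hk l' Hl').
    - intros xi Hxi'. unfold r. rewrite (dot_DS M xi (fun k l' => q k l' + e * d k l')).
      rewrite (DS_ext _ _ (fun k l' => xi k l' * q k l' + e * (xi k l' * d k l')))
        by (intros; ring).
      rewrite DS_plus, DS_scal, <- !dot_DS.
      specialize (Hxi xi Hxi'). assert (0 <= e * dot M xi d) by (apply Rmult_le_pos; lra). lra.
    - intros k l' Hk Hl' Hz. unfold r, d. rewrite Hz.
      destruct (Hrho k l' Hk Hl'). assert (0 <= e * rho k l') by (apply Rmult_le_pos; lra). lra. }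
  specialize (Hmin r Hfr).
  assert (HL : L_alpha M alpha r - L_alpha M alpha q <= e * (D + INR M * (INR M * eta))).
  { unfold L_alpha. fold (DS M (fun i j => rpow (r i j) (1 + alpha) / (1 + alpha))).
    fold (DS M (fun i j => rpow (q i j) (1 + alpha) / (1 + alpha))).
    rewrite <- DS_minus.
    apply Rle_trans with (DS M (fun k l' => e * (d k l' * w k l' + eta))).
    - apply DS_le. intros k l' Hk Hl'.
      destruct (Hdl' e He k Hk l' Hl') as [Hnn Hb].
      eapply Rle_trans; [apply (conv_ineq alpha (q k l') (r k l')); [lra| apply Hq0; auto| exact Hnn]|].
      unfold r. replace (q k l' + e * d k l' - q k l') with (e * d k l') by ring.
      rewrite Rmult_assoc. apply Rmult_le_compat_l; lra.
    - rewrite DS_scal, DS_plus, DS_const. unfold D. rewrite dot_DS. lra. }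
  assert (Hfin : D + INR M * (INR M * eta) < 0).
  { unfold eta. replace (INR M * (INR M * (- D / (INR M * INR M + 1))))
      with (- D * (INR M * INR M) / (INR M * INR M + 1)) by (field; lra).
    replace D with (D * (INR M * INR M + 1) / (INR M * INR M + 1)) at 1 by (field; lra).
    unfold Rdiv. rewrite <- Rmult_plus_distr_r.
    apply Rmult_neg_pos; [nra|]. apply Rinv_0_lt_compat; lra. }
  assert (e * (D + INR M * (INR M * eta)) < 0).
  { rewrite Rmult_comm. apply Rmult_neg_pos; lra. }
  lra.
Qed.
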